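(* Let $m,M,T$ be positive integers with $M<T$, let $\Pi_{\mathcal{A}}^M=\{p_a(\mathbf{z}_{1:M}):a\in\mathcal{A}\}$ be a family of probability densities on $\mathbb{R}^{mM}$ and $\mathcal{P}_{\mathcal{B}}^M=\{p_b(\mathbf{z}_t\mid\mathbf{z}_{t-1},\dots,\mathbf{z}_{t-M}):b\in\mathcal{B}\}$ a family of conditional densities on $\mathbb{R}^m$ given $\mathbb{R}^{mM}$. Assume the functions in the trajectory family $\mathcal{P}^{T,M}_{\mathcal{A},\mathcal{B}}=\{p_a(\mathbf{z}_{1:M})\prod_{t=M+1}^Tp_{b_t}(\mathbf{z}_t\mid\mathbf{z}_{t-1},\dots,\mathbf{z}_{t-M}) : a\in\mathcal{A},\ b_t\in\mathcal{B}\}$ are linearly independent under finite mixtures on $\mathbb{R}^{mT}$. Then the MSM family $\mathcal{M}^T(\Pi_{\mathcal{A}}^M,\mathcal{P}_{\mathcal{B}}^M)$ is identifiable up to permutations.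
   Context: A family of functions $\{g_\alpha:\alpha\in\mathcal{S}\}$ defined on a set $D$ is linearly independent under finite mixtures (on $D$) if for every finite $\mathcal{S}_0\subset\mathcal{S}$ the functions $\{g_\alpha:\alpha\in\mathcal{S}_0\}$ are linearly independent as functions on $D$ (the trajectory family is indexed by tuples $(a,b_{M+1},\dots,b_T)$). MSM family $\mathcal{M}^T(\Pi_{\mathcal{A}}^M,\mathcal{P}_{\mathcal{B}}^M)$: all functions $p(\mathbf{z}_{1:T})=\sum_{i=1}^{C}c_ip_{a^i}(\mathbf{z}_{1:M})\prod_{t=M+1}^Tp_{b^i_t}(\mathbf{z}_t\mid\mathbf{z}_{t-1},\dots,\mathbf{z}_{t-M})$, where $K_0,K<+\infty$, $\mathcal{A}_0\subset\mathcal{A}$, $\mathcal{B}_0\subset\mathcal{B}$, $|\mathcal{A}_0|=K_0$, $|\mathcal{B}_0|=K$, $C=K_0K^{T-M}$, $a^i\in\mathcal{A}_0$, $b^i_t\in\mathcal{B}_0$, the tuples $(a^i,b^i_{M+1},\dots,b^i_T)$ pairwise distinct, $c_i>0$, $\sum_ic_i=1$. Identifiable up to permutations: for any $p,\tilde p$ in the family (with data $(C,K_0,K,c_i,a^i,b^i_t)$ and $(\tilde C,\tilde K_0,\tilde K,\tilde c_i,\tilde a^i,\tilde b^i_t)$), $p=\tilde p$ on $\mathbb{R}^{mT}$ implies $C=\tilde C$, $K_0=\tilde K_0$, $K=\tilde K$, and for each $i$ there is $j$ with: (1) $c_i=\tilde c_j$; (2) $b^i_{t_1}=b^i_{t_2}$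 for $M<t_1\ne t_2\le T$ implies $\tilde b^j_{t_1}=\tilde b^j_{t_2}$; (3) $p_{a^i}=p_{\tilde a^j}$ on $\mathbb{R}^{mM}$; (4) $p_{b^i_t}=p_{\tilde b^j_t}$ on $\mathbb{R}^{m(M+1)}$ for all $M<t\le T$. *)

(* Defs.v *)
From HB Require Import structures.
From mathcomp Require Import all_boot all_order all_algebra.
From mathcomp Require Import reals.
Set Implicit Arguments. Unset Strict Implicit. Unset Printing Implicit Defensive.
Import Order.TTheory GRing.Theory Num.Theory.
Local Open Scope ring_scope.

(* A point z_{1:T} of R^{mT} is a map 'I_T -> 'rV[R]_m (0-indexed: z (i) is
   z_{i+1} in the paper).  [ext z n] reads z at a natural index (0 outside). *)
Definition ext (R : realType) (m T : nat) (z : 'I_T -> 'rV[R]_m) (n : nat)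
  : 'rV[R]_m :=
  match (insub n : option 'I_T) with Some i => z i | None => 0 end.

(* Trajectory density
   p_a(z_{1:M}) * prod_{t=M+1}^T p_{b_t}(z_t | z_{t-1},...,z_{t-M}).
   pa a : ('I_M -> 'rV_m) -> R  is p_a, with argument (z_1,...,z_M);
   pb b x y is p_b(x | y) with y j = z_{t-1-j} (j < M);
   b : 'I_(T-M) -> B, b k = b_{M+1+k}. *)
Definition traj (R : realType) (m M T : nat) (A B : Type)
  (pa : A -> ('I_M -> 'rV[R]_m) -> R)
  (pb : B -> 'rV[R]_m -> ('I_M -> 'rV[R]_m) -> R)
  (a : A) (b : 'I_(T - M) -> B) (z : 'I_T -> 'rV[R]_m) : R :=
  pa a (fun j : 'I_M => ext z j) *
  \prod_(k < T - M)
     pb (b k) (ext z (M + k)%N) (fun j : 'I_M => ext z (M + k - 1 - j)%N).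

Definition lin_indep_finite_mixtures (R : realType) (I D : Type)
  (g : I -> D -> R) : Prop :=
  forall (n : nat) (idx : 'I_n -> I) (lam : 'I_n -> R),
    injective idx ->
    (forall x : D, \sum_(k < n) lam k * g (idx k) x = 0) ->
    forall k, lam k = 0.

(* p is the MSM density with data (C, K0, K, c_i, a^i, b^i_t):
   A_0 = image of the injective A0 : 'I_K0 -> A (so |A_0| = K0),
   B_0 = image of the injective B0 : 'I_K -> B (so |B_0| = K). *)
Definition is_msm (R : realType) (m M T : nat) (A B : Type)
  (pa : A -> ('I_M -> 'rV[R]_m) -> R)
  (pb : B -> 'rV[R]_m -> ('I_M -> 'rV[R]_m) -> R)
  (p : ('I_T -> 'rV[R]_m) -> R)
  (C K0 K : nat) (c : 'I_C -> R) (a : 'I_C -> A) (b : 'I_C -> 'I_(T - M) -> B)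
  : Prop :=
  exists (A0 : 'I_K0 -> A) (B0 : 'I_K -> B),
    [/\ [/\ injective A0, injective B0 & C = (K0 * K ^ (T - M))%N],
        (forall i, exists k, a i = A0 k),
        (forall i t, exists k, b i t = B0 k),
        injective (fun i => (a i, b i)) &
        [/\ (forall i, 0 < c i),
            \sum_(i < C) c i = 1 &
            (forall z, p z = \sum_(i < C) c i * traj pa pb (a i) (b i) z)]].

Definition msm_identifiable (R : realType) (m M T : nat) (A B : Type)
  (pa : A -> ('I_M -> 'rV[R]_m) -> R)
  (pb : B -> 'rV[R]_m -> ('I_M -> 'rV[R]_m) -> R) : Prop :=
  forall (p p' : ('I_T -> 'rV[R]_m) -> R)
    (C K0 K : nat) (c : 'I_C -> R) (a : 'I_C -> A) (b : 'I_C -> 'I_(T - M) -> B)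
    (C' K0' K' : nat) (c' : 'I_C' -> R) (a' : 'I_C' -> A)
    (b' : 'I_C' -> 'I_(T - M) -> B),
    is_msm pa pb p K0 K c a b ->
    is_msm pa pb p' K0' K' c' a' b' ->
    (forall z, p z = p' z) ->
    [/\ C = C', K0 = K0', K = K' &
      forall i : 'I_C, exists j : 'I_C',
        [/\ c i = c' j,
            (forall t1 t2 : 'I_(T - M), t1 <> t2 ->
                b i t1 = b i t2 -> b' j t1 = b' j t2),
            (forall x, pa (a i) x = pa (a' j) x) &
            (forall (t : 'I_(T - M)) x y, pb (b i t) x y = pb (b' j t) x y)]].

(* Main.v *)
Require Import Defs.
From HB Require Import structures.
From mathcomp Require Import all_boot all_order all_algebra.
From mathcomp Require Import reals boolp.
Import Order.TTheory GRing.Theory Num.Theory.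
Local Open Scope ring_scope.

Lemma group_zero (R : realType) (I : eqType) (D : Type) (g : I -> D -> R) :
  lin_indep_finite_mixtures g ->
  forall n (idx : 'I_n -> I) (lam : 'I_n -> R),
  (forall x, \sum_(k < n) lam k * g (idx k) x = 0) ->
  forall k0, \sum_(k < n | idx k == idx k0) lam k = 0.
Proof.
move=> Hg n idx lam Hs k0.
pose s := undup [seq idx k | k <- enum 'I_n].
have us : uniq s by exact: undup_uniq.
have ins k : idx k \in s by rewrite mem_undup map_f // mem_enum.
pose p (k : 'I_n) : 'I_(size s) := Ordinal (etrans (index_mem _ _) (ins k)).
pose idx' (i : 'I_(size s)) := nth (idx k0) s i.
have idxp k : idx' (p k) = idx k by rewrite /idx' /= nth_index.
have eqp k i : (idx k == idx' i) = (p k == i).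
  apply/eqP/eqP => [E|<-]; last by rewrite idxp.
  by apply: val_inj; rewrite /= E /idx' index_uniq.
pose lam' i := \sum_(k < n | idx k == idx' i) lam k.
have inj' : injective idx'.
  move=> i j /eqP; rewrite /idx' nth_uniq // => /eqP; exact: val_inj.
have Hs' x : \sum_(i < size s) lam' i * g (idx' i) x = 0.
  rewrite -[RHS](Hs x) [RHS](partition_big p predT) //=.
  apply: eq_bigr => i _; rewrite /lam' big_distrl /=.
  apply: eq_big => [k|k /eqP ->]; first by rewrite eqp.
  by [].
have := Hg _ idx' lam' inj' Hs' (p k0).
by rewrite /lam' idxp.
Qed.

Lemma match_lemma (R : realType) (X D : Type) (g : X -> D -> R)
  (Hg : lin_indep_finite_mixtures g) C C' (tup : 'I_C -> X) (tup' : 'I_C' -> X)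
  (c : 'I_C -> R) (c' : 'I_C' -> R) :
  injective tup -> injective tup' -> (forall i, 0 < c i) ->
  (forall x, \sum_i c i * g (tup i) x = \sum_j c' j * g (tup' j) x) ->
  forall i, exists j, tup' j = tup i /\ c i = c' j.
Proof.
move=> it it' cpos E i.
pose I := {classic X}.
pose idx (k : 'I_(C + C')) : I := match split k with inl i => tup i | inr j => tup' j end.
pose lam (k : 'I_(C + C')) := match split k with inl i => c i | inr j => - c' j end.
have sl : forall i, split (lshift C' i) = inl i := fun i => unsplitK (inl i).
have sr : forall i, split (rshift C i) = inr i := fun i => unsplitK (inr i).
have Hs : forall x, \sum_k lam k * (g : I -> D -> R) (idx k) x = 0.
  move=> x; rewrite big_split_ord /=.
  under eq_bigr => k _ do rewrite /lam /idx sl.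
  under [X in _ + X]eq_bigr => k _ do rewrite /lam /idx sr.
  by rewrite E -big_split /=; apply: big1 => j _; rewrite mulNr addrN.
have := @group_zero R I D g Hg _ idx lam Hs (lshift C' i).
rewrite big_mkcond big_split_ord /=.
under eq_bigr => k _ do rewrite /lam /idx !sl.
under [X in _ + X]eq_bigr => k _ do rewrite /lam /idx sr sl.
have e1 : forall k, (tup k == tup i :> I) = (k == i).
  by move=> k; apply/eqP/eqP => [/it|->].
under eq_bigr => k _ do rewrite e1.
rewrite -big_mkcond big_pred1_eq.
case: (pselect (exists j, tup' j = tup i)) => [[j ej]|nj].
  rewrite (bigD1 j) //= big1 ?addr0.
    by rewrite ej eqxx => /eqP; rewrite subr_eq0 => /eqP ->; exists j.
  move=> k /eqP nk; case: eqP => // ek; exfalso; apply: nk; apply: it'; by rewrite ek ej.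
rewrite big1 ?addr0 => [cz|k _]; first by have := cpos i; rewrite cz ltxx.
by case: eqP => // ek; exfalso; apply: nj; exists k.
Qed.

Lemma surj_lemma (A B : Type) n K0 K C (A0 : 'I_K0 -> A) (B0 : 'I_K -> B)
  (a : 'I_C -> A) (b : 'I_C -> 'I_n -> B) :
  injective A0 -> injective B0 -> C = (K0 * K ^ n)%N ->
  (forall i, exists k, a i = A0 k) -> (forall i t, exists k, b i t = B0 k) ->
  injective (fun i => (a i, b i)) ->
  forall k (f : 'I_n -> 'I_K), exists i, a i = A0 k /\ forall t, b i t = B0 (f t).
Proof.
move=> iA iB EC Ha Hb itup k f.
pose F i : 'I_K0 * {ffun 'I_n -> 'I_K} :=
  (proj1_sig (cid (Ha i)), [ffun t => proj1_sig (cid (Hb i t))]).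
have Fa i : a i = A0 (F i).1 := proj2_sig (cid (Ha i)).
have Fb i t : b i t = B0 ((F i).2 t).
  by rewrite ffunE; exact: (proj2_sig (cid (Hb i t))).
have injF : injective F.
  move=> i j E; apply: itup; congr pair.
    by rewrite Fa (Fa j) E.
  by apply: funext => t; rewrite Fb (Fb j) E.
have hc : (#|{: 'I_K0 * {ffun 'I_n -> 'I_K}}| <= #|{: 'I_C}|)%N.
  by rewrite card_prod card_ffun !card_ord EC.
have := inj_card_onto injF hc (k, [ffun t => f t]).
case/codomP => i Ei; exists i; split.
  by rewrite Fa -Ei.
by move=> t; rewrite Fb -Ei ffunE.
Qed.

Lemma half (A B : Type) n K0 K C K0' K' C' (A0 : 'I_K0 -> A) (B0 : 'I_K -> B)
  (a : 'I_C -> A) (b : 'I_C -> 'I_n -> B)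
  (A0' : 'I_K0' -> A) (B0' : 'I_K' -> B)
  (a' : 'I_C' -> A) (b' : 'I_C' -> 'I_n -> B) :
  (0 < n)%N -> (0 < C)%N ->
  injective A0 -> injective B0 -> C = (K0 * K ^ n)%N ->
  (forall i, exists k, a i = A0 k) -> (forall i t, exists k, b i t = B0 k) ->
  injective (fun i => (a i, b i)) ->
  injective A0' -> injective B0' ->
  (forall i, exists k, a' i = A0' k) -> (forall i t, exists k, b' i t = B0' k) ->
  (forall i, exists j, (a' j, b' j) = (a i, b i)) ->
  (K0 <= K0')%N /\ (K <= K')%N.
Proof.
move=> n0 C0 iA iB EC Ha Hb itup iA' iB' Ha' Hb' Hm.
have := C0; rewrite EC muln_gt0 expn_gt0 => /andP[K0p /orP[Kp|]]; last first.
  by rewrite eqn0Ngt n0.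
have S := @surj_lemma A B n K0 K C A0 B0 a b iA iB EC Ha Hb itup.
split.
  have ex (k : 'I_K0) : exists k', A0' k' = A0 k.
    have [i [ai _]] := S k (fun _ => Ordinal Kp).
    have [j [aj _]] := Hm i.
    have [k' ak'] := Ha' j.
    by exists k'; rewrite -ak' aj ai.
  pose h k := proj1_sig (cid (ex k)).
  have hi : injective h.
    move=> k1 k2 E; apply: iA.
    by rewrite -(proj2_sig (cid (ex k1))) -(proj2_sig (cid (ex k2))) -/(h k1) E.
  by have := leq_card _ hi; rewrite !card_ord.
have ex (k : 'I_K) : exists k', B0' k' = B0 k.
  have [i [_ bi]] := S (Ordinal K0p) (fun _ => k).
  have [j [_ bj]] := Hm i.
  have [k' bk'] := Hb' j (Ordinal n0).
  by exists k'; rewrite -bk' bj bi.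
pose h k := proj1_sig (cid (ex k)).
have hi : injective h.
  move=> k1 k2 E; apply: iB.
  by rewrite -(proj2_sig (cid (ex k1))) -(proj2_sig (cid (ex k2))) -/(h k1) E.
by have := leq_card _ hi; rewrite !card_ord.
Qed.

Theorem theorem3 (R : realType) (m M T : nat) (A B : Type)
  (pa : A -> ('I_M -> 'rV[R]_m) -> R)
  (pb : B -> 'rV[R]_m -> ('I_M -> 'rV[R]_m) -> R) :
  (0 < m)%N -> (0 < M)%N -> (M < T)%N ->
  (forall a x, 0 <= pa a x) ->
  (forall b x y, 0 <= pb b x y) ->
  lin_indep_finite_mixtures
    (fun ab : A * ('I_(T - M) -> B) => traj pa pb ab.1 ab.2) ->
  @msm_identifiable R m M T A B pa pb.
Proof.
move=> _ _ MT _ _ Hlin p p' C K0 K c a b C' K0' K' c' a' b'.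
case=> A0 [B0 [[iA iB EC] Ha Hb itup [cpos csum Hp]]].
case=> A0' [B0' [[iA' iB' EC'] Ha' Hb' itup' [cpos' csum' Hp']]] Heq.
have n0 : (0 < T - M)%N by rewrite subn_gt0.
have Cpos (C1 : nat) (c1 : 'I_C1 -> R) : \sum_(i < C1) c1 i = 1 -> (0 < C1)%N.
  case: (posnP C1) => // C10 cs.
  have : \sum_(i < C1) c1 i = 0.
    by apply: big1 => i _; have := ltn_ord i; rewrite {2}C10.
  by rewrite cs => /eqP; rewrite oner_eq0.
have E x : \sum_i c i * traj pa pb (a i, b i).1 (a i, b i).2 x
         = \sum_j c' j * traj pa pb (a' j, b' j).1 (a' j, b' j).2 x.
  exact: (etrans (esym (Hp x)) (etrans (Heq x) (Hp' x))).
have M1 := @match_lemma R _ _ _ Hlin C C' (fun i => (a i, b i)) (fun j => (a' j, b' j))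
  c c' itup itup' cpos E.
have M2 := @match_lemma R _ _ _ Hlin C' C (fun j => (a' j, b' j)) (fun i => (a i, b i))
  c' c itup' itup cpos' (fun x => esym (E x)).
have [h1 h2] := @half A B _ K0 K C K0' K' C' A0 B0 a b A0' B0' a' b' n0 (Cpos _ _ csum)
  iA iB EC Ha Hb itup iA' iB' Ha' Hb' (fun i => match M1 i with ex_intro j (conj e _) => ex_intro _ j e end).
have [h3 h4] := @half A B _ K0' K' C' K0 K C A0' B0' a' b' A0 B0 a b n0 (Cpos _ _ csum')
  iA' iB' EC' Ha' Hb' itup' iA iB Ha Hb (fun i => match M2 i with ex_intro j (conj e _) => ex_intro _ j e end).
have eK0 : K0 = K0' by apply/eqP; rewrite eqn_leq h1 h3.
have eK : K = K' by apply/eqP; rewrite eqn_leq h2 h4.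
split => //; first by rewrite EC EC' eK0 eK.
move=> i; have [j [[ea eb] cij]] := M1 i.
exists j; split => //.
- by move=> t1 t2 _; rewrite eb.
- by move=> x; rewrite ea.
- by move=> t x y; rewrite eb.
Qed.
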